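(* Let $l\ge1$ and let $(X_l,M_l),\dots,(X_1,M_1)$ be transformation monoids. Then the wreath product monoid $M_l\circ\cdots\circ M_1$ embeds (as a monoid) in $\mathrm{Ell}(r_0,T(|X_l|,\dots,|X_1|))$.
   Context: A transformation monoid $(X,M)$ is a nonempty set $X$ with a submonoid $M$ of the monoid of all full transformations of $X$ (maps written on the right). For $X=X_l\times\cdots\times X_1$ and $i\le l$, $\pi_i$ is the projection onto $X_i$. A full transformation $\varphi$ of $X$ is sequential if for every $i$, elements with the same last $i$ components have images with the same last $i$ components. Given $(a_{i-1},\dots,a_1)$, the local map $(\cdot,a_{i-1},\dots,a_1)\varphi\pi_i:X_i\to X_i$ sends $x$ to the $i$-th component of $(\dots,x,a_{i-1},\dots,a_1)\varphi$ (well defined by sequentiality). The wreath product $M_l\circ\cdots\circ M_1$ is the monoid of all sequential $\varphi$ with $\varphi\pi_1$ (as a map on $X_1$) in $M_1$ and every local map $(\cdot,a_{i-1},\dots,a_1)\varphi\pi_i$ in $M_i$. $\mathrm{Ell}(r_0,T)$ is the monoid of depth-preserving, distance-non-increasing self-maps of the vertex set of the rooted tree $(r_0,T)$ (depth = distance to $r_0$). $T(n_l,\dots,n_1)$ is the rooted tree of depth $l$ in which each vertex of depth $i-1$ has exactly $n_i$ sons. *)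

(* Defs.v *)
From mathcomp Require Import all_boot.
Set Implicit Arguments. Unset Strict Implicit. Unset Printing Implicit Defensive.

Definition is_tmonoid (Y : Type) (M : (Y -> Y) -> Prop) : Prop :=
  M id /\ (forall f g, M f -> M g -> M (f \o g)).

(* Component i : 'I_l (0-based) is the factor X_{i+1}; "the last k
   components" are the components with index < k. *)
Definition point (l : nat) (X : 'I_l -> Type) : Type := forall i : 'I_l, X i.

Definition sequential (l : nat) (X : 'I_l -> Type)
    (phi : point X -> point X) : Prop :=
  forall (i : 'I_l) (x y : point X),
    (forall j : 'I_l, j <= i -> x j = y j) ->
    forall j : 'I_l, j <= i -> phi x j = phi y j.

(* Wreath product M_l o ... o M_1: sequential phi all of whose local maps
   (., a_{i-1}, ..., a_1) phi pi_i lie in M_i.  The local map at level i with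
   lower coordinates those of z is the map m with phi(y)_i = m(y_i) for all y
   agreeing with z below i. *)
Definition in_wreath (l : nat) (X : 'I_l -> Type)
    (M : forall i : 'I_l, (X i -> X i) -> Prop)
    (phi : point X -> point X) : Prop :=
  sequential phi /\
  forall (i : 'I_l) (z : point X),
    exists2 m : X i -> X i, M i m &
      forall y : point X, (forall j : 'I_l, j < i -> y j = z j) ->
        phi y i = m (y i).

Section Trees.
Variables (V : Type) (par : V -> option V) (r0 : V).

Definition pdepth (v : V) (n : nat) : Prop :=
  iter n (fun o => obind par o) (Some v) = Some r0.

Definition adj (u v : V) : Prop := par u = Some v \/ par v = Some u.

Inductive walk : V -> V -> nat -> Prop :=
  | walk0 v : walk v v 0
  | walkS u w v n : adj u w -> walk w v n -> walk u v n.+1.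

Definition dist_le (u v : V) (n : nat) : Prop :=
  exists2 m, m <= n & walk u v m.

(* Ell(r0,T): depth-preserving, distance-non-increasing self maps. *)
Definition in_Ell (f : V -> V) : Prop :=
  (forall v n, dist_le v r0 n <-> dist_le (f v) r0 n) /\
  (forall u v n, dist_le u v n -> dist_le (f u) (f v) n).
End Trees.

(* (V, par, r0) is a rooted tree isomorphic to T(|X_l|, ..., |X_1|):
   r0 is the root, every vertex has a finite depth, every vertex of depth i-1
   (i = 1..l) has a set of sons in bijection with X_i, and vertices of depth
   l have no sons. *)
Definition is_T_tree (V : Type) (par : V -> option V) (r0 : V)
    (l : nat) (X : 'I_l -> Type) : Prop :=
  [/\ par r0 = None,
      (forall v, exists n, pdepth par r0 v n),
      (forall (i : 'I_l) (v : V), pdepth par r0 v i ->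
          exists f : X i -> {w : V | par w = Some v}, bijective f)
    & (forall v w, pdepth par r0 v l -> par w <> Some v)].

(* Main.v *)
Require Import Defs.
From mathcomp Require Import all_boot.
From Stdlib Require Import Classical ClassicalEpsilon FunctionalExtensionality ProofIrrelevance.
Set Implicit Arguments. Unset Strict Implicit. Unset Printing Implicit Defensive.

Section Tree.
Variables (V : Type) (par : V -> option V) (r0 : V).
Hypothesis par_r0 : par r0 = None.

Lemma iter_None k : iter k (fun o => obind par o) None = None.
Proof. by elim: k => //= k ->. Qed.

Lemma pdepth_par u w n : par u = Some w -> pdepth par r0 w n -> pdepth par r0 u n.+1.
Proof. by rewrite /pdepth iterSr /= => ->. Qed.

Lemma pdepth_parE u w n : par u = Some w -> pdepth par r0 u n.+1 -> pdepth par r0 w n.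
Proof. by rewrite /pdepth iterSr /= => ->. Qed.

Lemma pdepth_uniq v n m : pdepth par r0 v n -> pdepth par r0 v m -> n = m.
Proof.
wlog le_nm : n m / n <= m.
  move=> H Hn Hm; case: (leqP n m) => h; first exact: H.
  by apply/esym/H => //; apply: ltnW.
move=> Hn Hm; case: (ltngtP n m) le_nm => // lt_nm _.
move: Hm; rewrite /pdepth -(subnK (ltnW lt_nm)) iterD Hn.
have : 0 < m - n by rewrite subn_gt0.
case: (m - n) => [|k] // _.
by rewrite iterSr /= par_r0 iter_None.
Qed.

Lemma pdepth_walk v n : pdepth par r0 v n -> walk par v r0 n.
Proof.
elim: n v => [|n IH] v.
  by rewrite /pdepth /= => [[->]]; constructor.
rewrite /pdepth iterSr /=; case E: (par v) => [w|]; last by rewrite iter_None.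
move=> H; apply: (@walkS _ _ v w); first by left.
exact: IH.
Qed.

Hypothesis hdep : forall v, exists n, pdepth par r0 v n.

Lemma walk_depth u w m : walk par u w m ->
  forall a b, pdepth par r0 u a -> pdepth par r0 w b -> a <= b + m.
Proof.
elim => [v|u' w' v n Hadj _ IH] a b Ha Hb.
  by rewrite (pdepth_uniq Ha Hb) addn0.
have [c Hc] := hdep w'.
have := IH _ _ Hc Hb; rewrite addnS.
case: Hadj => E.
  by rewrite (pdepth_uniq Ha (pdepth_par E Hc)).
have := pdepth_uniq (pdepth_par E Ha) Hc => <- h.
by apply: leq_trans (leqnSn _) (leq_trans h (leqnSn _)).
Qed.

End Tree.

Section Enc.
Variables (l : nat) (X : 'I_l -> Type) (V : Type) (par : V -> option V) (r0 : V).
Hypothesis hT : is_T_tree par r0 X.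
Variable G : forall i : 'I_l, V -> X i -> V.
Arguments G : clear implicits.
Hypothesis HG : forall (i : 'I_l) v, pdepth par r0 v i ->
  [/\ forall a, par (G i v a) = Some v, injective (G i v)
    & forall w, par w = Some v -> exists a, G i v a = w].

Fixpoint enc (x : point X) (d : nat) : V :=
  match d with
  | 0 => r0
  | d'.+1 => match (insub d' : option 'I_l) with
             | Some i => G i (enc x d') (x i)
             | None => enc x d'
             end
  end.

Lemma encS x (i : 'I_l) : enc x i.+1 = G i (enc x i) (x i).
Proof. by rewrite /= valK. Qed.

Lemma enc_depth x d : d <= l -> pdepth par r0 (enc x d) d.
Proof.
elim: d => [|d IH] hd //.
have hd' : d < l by [].
rewrite (encS x (Ordinal hd')).
have [H1 _ _] := @HG (Ordinal hd') _ (IH (ltnW hd')).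
exact: pdepth_par (H1 _) (IH (ltnW hd')).
Qed.

Lemma enc_par x (i : 'I_l) : par (enc x i.+1) = Some (enc x i).
Proof.
rewrite encS; have [H1 _ _] := @HG i _ (enc_depth x (ltnW (ltn_ord i))); exact: H1.
Qed.

Lemma enc_inj x y d : d <= l -> enc x d = enc y d ->
  forall j : 'I_l, j < d -> x j = y j.
Proof.
elim: d => [|d IH] hd E j hj //.
have hd' : d < l by [].
move: E; rewrite (encS x (Ordinal hd')) (encS y (Ordinal hd')) => E.
have Ep : enc x d = enc y d.
  have := enc_par x (Ordinal hd'); have := enc_par y (Ordinal hd').
  rewrite (encS x (Ordinal hd')) (encS y (Ordinal hd')) E /= => -> [] //.
have [_ Hinj _] := @HG (Ordinal hd') _ (enc_depth x (ltnW hd')).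
have {}E : G (Ordinal hd') (enc x d) (x (Ordinal hd')) = G (Ordinal hd') (enc x d) (y (Ordinal hd')).
  by move: E => /=; rewrite -Ep.
have {}E := Hinj _ _ E.
rewrite ltnS leq_eqVlt in hj; case/orP: hj => [/eqP hj|hj].
  by have -> : j = Ordinal hd' by apply: val_inj.
exact: IH (ltnW hd') Ep j hj.
Qed.

Lemma enc_agree x y d : (forall j : 'I_l, j < d -> x j = y j) -> enc x d = enc y d.
Proof.
elim: d => [|d IH] H //=.
rewrite IH; last by move=> j hj; apply: H; apply: ltnW.
case: insubP => [i _ hi|] //.
by rewrite H // hi.
Qed.

Lemma enc_surj (x0 : point X) v : exists x d, d <= l /\ v = enc x d.
Proof.
case: hT => par_r0 hdep hch hleaf.
have [n Hn] := hdep v.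
suff : n <= l /\ exists x, v = enc x n.
  by case=> hn [x ->]; exists x, n.
elim: n v Hn => [|n IH] v Hn.
  by move: Hn; rewrite /pdepth /= => [[->]]; split=> //; exists x0.
move: Hn; rewrite /pdepth iterSr /=; case E: (par v) => [w|]; last by rewrite iter_None.
move=> Hw; have [hn [x Ex]] := IH w Hw.
have hnl : n < l.
  rewrite ltn_neqAle hn andbT; apply/eqP => nl.
  by apply: (hleaf w v) => //; rewrite -nl.
split=> //.
pose i := Ordinal hnl.
have [_ _ Hs] := @HG i _ Hw.
have [a Ea] := Hs v E.
exists (dfwith x a).
have e1 : enc (dfwith x a) n = enc x n.
  apply: enc_agree => j hj; rewrite dfwith_out //.
  by apply/negP => /eqP ej; rewrite -ej /= ltnn in hj.
change (v = enc (dfwith x a) (nat_of_ord i).+1).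
rewrite (encS _ i) /= e1 dfwith_in -Ex Ea //.
Qed.

Variable x0 : point X.

Definition hmap (phi : point X -> point X) (v : V) : V :=
  let p := epsilon (inhabits (x0, 0))
    (fun p : point X * nat => p.2 <= l /\ v = enc p.1 p.2) in
  enc (phi p.1) p.2.

Lemma hK phi : sequential phi -> forall y d, d <= l ->
  hmap phi (enc y d) = enc (phi y) d.
Proof.
case: hT => par_r0 hdep _ _.
move=> Hs y d hd; rewrite /hmap /=.
have := epsilon_spec (inhabits (x0, 0))
  (fun p : point X * nat => p.2 <= l /\ enc y d = enc p.1 p.2)
  (ex_intro _ (y, d) (conj hd erefl)).
move: (epsilon _ _) => p [h2 E].
have ed : p.2 = d.
  apply: (pdepth_uniq par_r0 _ (enc_depth y hd)).
  by rewrite E; apply: enc_depth.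
rewrite ed in E.
have ag := enc_inj hd E.
rewrite ed; apply: enc_agree => j hj.
case: d hd {ed E} ag hj => [|k] hk ag hj //.
have hk' : k < l by [].
apply: (Hs (Ordinal hk') p.1 y _ j hj).
move=> j' hj'; apply/esym/ag; exact: hj'.
Qed.

Lemma hid v : hmap id v = v.
Proof.
rewrite /hmap /=.
have [x [d [hd Ev]]] := enc_surj x0 v.
have := epsilon_spec (inhabits (x0, 0))
  (fun p : point X * nat => p.2 <= l /\ v = enc p.1 p.2)
  (ex_intro _ (x, d) (conj hd Ev)).
move: (epsilon _ _) => p [_ E].
by rewrite -E.
Qed.

Lemma h_par phi : sequential phi -> forall u w, par u = Some w ->
  par (hmap phi u) = Some (hmap phi w).
Proof.
case: hT => par_r0 hdep _ _.
move=> Hs u w E.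
have [x [d [hd Eu]]] := enc_surj x0 u.
have [m Hm] := hdep w.
have Hu := pdepth_par E Hm.
have ed : d = m.+1 by apply: (pdepth_uniq par_r0 (enc_depth x hd)); rewrite -Eu.
have hm : m < l by rewrite -ed.
pose i := Ordinal hm.
have Eu' : u = enc x (nat_of_ord i).+1 by rewrite Eu ed.
have Ew : w = enc x i.
  by move: E; rewrite Eu' enc_par => -[].
rewrite Eu' Ew !hK //; first by rewrite enc_par.
exact: ltnW.
Qed.

Lemma h_walk phi : sequential phi -> forall u v n, walk par u v n ->
  walk par (hmap phi u) (hmap phi v) n.
Proof.
move=> Hs u v n; elim => [z|u' w' v' k Hadj _ IH]; first by constructor.
apply: (@walkS _ _ _ (hmap phi w')) => //.
by case: Hadj => E; [left | right]; apply: h_par.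
Qed.

Lemma h_r0 phi : sequential phi -> hmap phi r0 = r0.
Proof. by move=> Hs; have := hK Hs x0 (leq0n l). Qed.

Lemma h_depth phi : sequential phi -> forall v a, pdepth par r0 v a ->
  pdepth par r0 (hmap phi v) a.
Proof.
case: hT => par_r0 hdep _ _.
move=> Hs v a Ha.
have [x [d [hd Ev]]] := enc_surj x0 v.
have ed : d = a by apply: (pdepth_uniq par_r0 (enc_depth x hd)); rewrite -Ev.
by rewrite Ev hK // ed; apply: enc_depth; rewrite -ed.
Qed.

Lemma h_Ell phi : sequential phi -> in_Ell par r0 (hmap phi).
Proof.
case: hT => par_r0 hdep _ _.
move=> Hs; split; last first.
  by move=> u v n [m hm W]; exists m => //; apply: h_walk.
move=> v n; split.
  by move=> [m hm W]; exists m => //; rewrite -(h_r0 Hs); apply: h_walk.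
move=> [m hm W].
have [a Ha] := hdep v.
have := walk_depth par_r0 hdep W (h_depth Hs Ha) (erefl _ : pdepth par r0 r0 0).
rewrite add0n => ham.
exists a; first exact: leq_trans hm.
exact: pdepth_walk.
Qed.

Lemma h_comp phi psi : sequential phi -> sequential psi ->
  forall v, hmap (psi \o phi) v = hmap psi (hmap phi v).
Proof.
move=> Hp Hq v.
have [x [d [hd ->]]] := enc_surj x0 v.
have Hc : sequential (psi \o phi).
  move=> i a b ag j hj /=; apply: Hq hj => k hk; exact: (Hp i a b ag k hk).
by rewrite !hK.
Qed.

Lemma h_inj phi psi : (forall v, hmap phi v = hmap psi v) ->
  sequential phi -> sequential psi -> forall x, phi x = psi x.
Proof.
move=> E Hp Hq x; apply: functional_extensionality_dep => j.
have := E (enc x l); rewrite !hK // => E'.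
exact: (enc_inj (leqnn l) E').
Qed.

End Enc.

Lemma exG (l : nat) (X : 'I_l -> Type) (V : Type) (par : V -> option V) (r0 : V)
  (hT : is_T_tree par r0 X) :
  exists G : forall i : 'I_l, V -> X i -> V,
  forall (i : 'I_l) v, pdepth par r0 v i ->
  [/\ forall a, par (G i v a) = Some v, injective (G i v)
    & forall w, par w = Some v -> exists a, G i v a = w].
Proof.
have H : forall (i : 'I_l) v, exists g : X i -> V, pdepth par r0 v i ->
  [/\ forall a, par (g a) = Some v, injective g
    & forall w, par w = Some v -> exists a, g a = w].
  move=> i v; case: (classic (pdepth par r0 v i)) => [Hd|Hn]; last by exists (fun _ => v).
  case: hT => _ _ H3 _; have [f [g fK gK]] := H3 i v Hd.
  exists (fun a => proj1_sig (f a)) => _; split.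
  - by move=> a; case: (f a).
  - move=> a b E; apply: (can_inj fK).
    move: (f a) (f b) E => [w p] [w' q] /= E; subst w'.
    by rewrite (proof_irrelevance _ p q).
  - move=> w Hw; exists (g (exist _ w Hw)); by rewrite gK.
exists (fun i v => proj1_sig (constructive_indefinite_description _ (H i v))).
move=> i v; exact: (proj2_sig (constructive_indefinite_description _ (H i v))).
Qed.

Theorem corollary3p5 (l : nat) (X : 'I_l -> Type)
    (M : forall i : 'I_l, (X i -> X i) -> Prop)
    (hl : 0 < l) (hX : forall i, inhabited (X i))
    (hM : forall i, is_tmonoid (M i))
    (V : Type) (par : V -> option V) (r0 : V)
    (hT : is_T_tree par r0 X) :
  exists h : (point X -> point X) -> (V -> V),
    [/\ (forall phi, in_wreath M phi -> in_Ell par r0 (h phi)),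
        (forall v, h id v = v),
        (forall phi psi, in_wreath M phi -> in_wreath M psi ->
           forall v, h (psi \o phi) v = h psi (h phi v))
      & (forall phi psi, in_wreath M phi -> in_wreath M psi ->
           (forall v, h phi v = h psi v) -> forall x, phi x = psi x)].
Proof.
have [G HG] := exG hT.
pose x0 : point X := fun i => epsilon (hX i) (fun _ => True).

exists (hmap r0 G x0); split.
- by move=> phi [Hs _]; apply: (h_Ell hT HG).
- by move=> v; apply: (hid hT HG).
- by move=> phi psi [Hp _] [Hq _]; apply: (h_comp hT HG).
- by move=> phi psi [Hp _] [Hq _] E; apply: (h_inj hT HG E).
Qed.
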